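(* For all $i \in \mathbb{N}$ and all $t \geq 0$, at most $((1+\alpha)^i - 1)N(t)$ nodes enter during $(t, t+Di]$ and $(1-\alpha)^i N(t) \leq N(t+Di) \leq (1+\alpha)^i N(t)$.
   Context: Consider an asynchronous message-passing system whose composition changes over time. An adversary generates, for each node $p$, at most one Enter($p$) signal and at most one Leave($p$) signal (a Leave($p$) signal for a crashed node $p$ may be generated at another active node; such forced leaves also count as leaves). A node is present at time $t$ if it has entered but not left by time $t$; $N(t)$ denotes the number of nodes present at time $t$. $D$ is an upper bound (unknown to the nodes) on message delay. Churn assumption: there is a constant $\alpha < 1$ (the churn rate) such that for every time $t$, the total number of nodes that enter or leave during $[t, t+D]$ is at most $\alpha N(t)$. *)

(* Defs.v *)
From Stdlib Require Import Reals Lra Lia List.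
Open Scope R_scope.

Section Churn.
Variable T : Type.

(* enter p = Some e : the (unique) Enter(p) signal occurs at time e;
   None : no Enter(p) signal is ever generated. Same for leave. *)

Definition present (enter leave : T -> option R) (t : R) (p : T) : Prop :=
  (exists e, enter p = Some e /\ e <= t) /\
  ~ (exists l, leave p = Some l /\ l <= t).

Definition occurs_in_closed (s : option R) (a b : R) : Prop :=
  exists x, s = Some x /\ a <= x <= b.

Definition occurs_in_Ioc (s : option R) (a b : R) : Prop :=
  exists x, s = Some x /\ a < x <= b.

Definition at_most (P : T -> Prop) (k : R) : Prop :=
  forall l : list T, NoDup l -> Forall P l -> INR (length l) <= k.

Definition is_count (P : T -> Prop) (n : nat) : Prop :=
  exists l : list T, NoDup l /\ (forall x, P x <-> In x l) /\ length l = n.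

End Churn.

Arguments present {T}.
Arguments at_most {T}.
Arguments is_count {T}.

(* Main.v *)
Require Import Defs.
From Stdlib Require Import Reals List.
From Stdlib Require Import Lra Lia Classical.
Open Scope R_scope.

Lemma split_list {T : Type} (P Q R : T -> Prop) (l : list T) :
  (forall x, P x -> Q x \/ R x) -> NoDup l -> Forall P l ->
  exists l1 l2, length l = (length l1 + length l2)%nat /\ NoDup l1 /\ NoDup l2 /\
    Forall Q l1 /\ Forall R l2 /\ incl l1 l /\ incl l2 l.
Proof.
  intros HPQR. induction l as [|a l IH]; intros Hnd Hf.
  - exists nil, nil. simpl. repeat split; try constructor; intros x Hx; inversion Hx.
  - inversion Hnd as [|a' l' Hnin Hnd']; subst.
    inversion Hf as [|a' l' Pa Hf']; subst.
    destruct (IH Hnd' Hf') as (l1 & l2 & Hlen & N1 & N2 & F1 & F2 & I1 & I2).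
    destruct (HPQR a Pa) as [Qa|Ra].
    + exists (a :: l1), l2. simpl. repeat split.
      * lia.
      * constructor; auto.
      * auto.
      * constructor; auto.
      * auto.
      * intros x [<-|Hx]; [left; auto | right; auto].
      * intros x Hx; right; auto.
    + exists l1, (a :: l2). simpl. repeat split.
      * lia.
      * auto.
      * constructor; auto.
      * auto.
      * constructor; auto.
      * intros x Hx; right; auto.
      * intros x [<-|Hx]; [left; auto | right; auto].
Qed.

Lemma at_most_union {T : Type} (P A B : T -> Prop) a b :
  (forall x, P x -> A x \/ B x) -> at_most A a -> at_most B b -> at_most P (a + b).
Proof.
  intros H HA HB l Hnd Hf.
  destruct (split_list P A B l H Hnd Hf) as (l1 & l2 & Hlen & N1 & N2 & F1 & F2 & _ & _).
  rewrite Hlen, plus_INR. specialize (HA l1 N1 F1). specialize (HB l2 N2 F2). lra.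
Qed.

Lemma count_at_most {T : Type} (Q : T -> Prop) n : is_count Q n -> at_most Q (INR n).
Proof.
  intros (lc & Hnd & Hiff & Hlen) l Hl Hf. apply le_INR. rewrite <- Hlen.
  apply NoDup_incl_length; auto. intros x Hx. apply Hiff.
  rewrite Forall_forall in Hf. auto.
Qed.

Lemma at_most_mono {T : Type} (P Q : T -> Prop) k k' :
  (forall x, P x -> Q x) -> at_most Q k -> k <= k' -> at_most P k'.
Proof.
  intros H HQ Hk l Hnd Hf. assert (Forall Q l).
  { rewrite Forall_forall in *. auto. }
  specialize (HQ l Hnd H0). lra.
Qed.

Lemma count_le {T : Type} (P : T -> Prop) n k : is_count P n -> at_most P k -> INR n <= k.
Proof.
  intros (lc & Hnd & Hiff & Hlen) H. rewrite <- Hlen. apply H; auto.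
  rewrite Forall_forall. intros x Hx. apply Hiff; auto.
Qed.

Theorem lemma1 (T : Type) (enter leave : T -> option R) (N : R -> nat)
  (D alpha : R) (HD : 0 <= D) (Halpha : alpha < 1)
  (HN : forall t, 0 <= t -> is_count (present enter leave t) (N t))
  (Hchurn : forall t, 0 <= t ->
     at_most (fun p => occurs_in_closed (enter p) t (t + D) \/
                       occurs_in_closed (leave p) t (t + D))
             (alpha * INR (N t))) :
  forall (i : nat) (t : R), 0 <= t ->
    at_most (fun p => occurs_in_Ioc (enter p) t (t + D * INR i))
            (((1 + alpha) ^ i - 1) * INR (N t)) /\
    (1 - alpha) ^ i * INR (N t) <= INR (N (t + D * INR i)) /\
    INR (N (t + D * INR i)) <= (1 + alpha) ^ i * INR (N t).
Proof.
  assert (Hpos : forall t, 0 <= t -> 0 <= alpha * INR (N t)).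
  { intros t Ht. specialize (Hchurn t Ht nil (NoDup_nil _) (Forall_nil _)).
    simpl in Hchurn. lra. }
  assert (Hup : forall t s k, 0 <= t -> t <= s ->
     at_most (fun p => occurs_in_Ioc (enter p) t s) k -> INR (N s) <= INR (N t) + k).
  { intros t s k Ht Hts Hk. apply (count_le _ _ _ (HN s ltac:(lra))).
    apply (at_most_union _ (present enter leave t) (fun p => occurs_in_Ioc (enter p) t s)).
    - intros p [[e [He Hes]] Hnl].
      destruct (Rle_dec e t) as [Het|Het].
      + left. split. exists e; split; auto.
        intros [l [Hl Hlt]]. apply Hnl. exists l; split; auto; lra.
      + right. exists e. split; auto. lra.
    - apply count_at_most. apply HN; auto.
    - auto. }
  assert (Hlow : forall t, 0 <= t -> (1 - alpha) * INR (N t) <= INR (N (t + D))).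
  { intros t Ht.
    assert (H : INR (N t) <= INR (N (t + D)) + alpha * INR (N t)).
    { apply (count_le _ _ _ (HN t Ht)).
      apply (at_most_union _ (present enter leave (t + D))
        (fun p => occurs_in_closed (enter p) t (t + D) \/
                  occurs_in_closed (leave p) t (t + D))).
      - intros p Hp. destruct (classic (present enter leave (t + D) p)) as [H|H].
        + left; auto.
        + right. right. destruct Hp as [[e [He Het]] Hnl].
          destruct (classic (exists l, leave p = Some l /\ l <= t + D)) as [[l [Hl Hlt]]|Hn].
          * exists l. split; auto. split; auto.
            destruct (Rle_dec l t) as [Hle|Hle]; [exfalso; apply Hnl; exists l; auto | lra].
          * exfalso. apply H. split; auto. exists e; split; auto; lra.
      - apply count_at_most. apply HN; lra.
      - apply Hchurn; auto. }
    lra. }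
  intros i t Ht.
  induction i as [|i IH].
  - simpl. replace (t + D * 0) with t by ring. split; [|lra].
    intros l Hnd Hf. destruct l as [|a l].
    + simpl. lra.
    + exfalso. inversion Hf as [|a' l' [x [Hx Hxt]] _]; subst. lra.
  - destruct IH as (IHE & IHL & IHU).
    rewrite S_INR.
    set (s := t + D * INR i).
    assert (Hs : 0 <= s) by (unfold s; pose proof (pos_INR i); nra).
    assert (Hts : t <= s) by (unfold s; pose proof (pos_INR i); nra).
    replace (t + D * (INR i + 1)) with (s + D) by (unfold s; ring).
    assert (HaN : alpha * INR (N s) <= alpha * ((1 + alpha) ^ i * INR (N t))).
    { destruct (Rle_dec 0 alpha) as [Ha|Ha].
      - apply Rmult_le_compat_l; auto.
      - assert (INR (N t) = 0).
        { pose proof (Hpos t Ht). pose proof (pos_INR (N t)). nra. }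
        assert (INR (N s) = 0).
        { pose proof (Hpos s Hs). pose proof (pos_INR (N s)). nra. }
        rewrite H, H0. lra. }
    assert (HE : at_most (fun p => occurs_in_Ioc (enter p) t (s + D))
                   (((1 + alpha) ^ S i - 1) * INR (N t))).
    { apply (at_most_mono _ (fun p => occurs_in_Ioc (enter p) t (s + D)) (((1 + alpha) ^ i - 1) * INR (N t) + alpha * INR (N s))).
      - intros p Hp. exact Hp.
      - apply (at_most_union _ (fun p => occurs_in_Ioc (enter p) t s)
          (fun p => occurs_in_closed (enter p) s (s + D) \/
                    occurs_in_closed (leave p) s (s + D))).
        + intros p [x [Hx Hxt]]. destruct (Rle_dec x s).
          * left. exists x. split; auto. lra.
          * right. left. exists x. split; auto. lra.
        + exact IHE.
        + apply Hchurn; auto.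
      - simpl. lra. }
    split; [exact HE|]. split.
    + simpl. pose proof (Hlow s Hs). 
      assert (0 <= 1 - alpha) by lra. 
      pose proof (Rmult_le_compat_l (1 - alpha) _ _ H0 IHL). fold s in H1. rewrite Rmult_assoc. lra.
    + pose proof (Hup t (s + D) _ Ht ltac:(lra) HE). lra.
Qed.
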